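(* Let $\rho>0$ and assume $\Gamma(0)<\Gamma(1)$ and $1+\rho\ln\mu(0)>0$. Then for every $\rho$-admissible scaling $n\mapsto L_n$, \[ \lim_{n\to\infty}\mathbb{E}[I_n(L_n)]=\begin{cases}\infty&\text{if } 1+\rho\ln\Gamma(0)<0,\\ 0&\text{if } 1+\rho\ln\Gamma(0)>0.\end{cases} \]
   Context: Homogeneous binary MAG model. Fix $\mu(0),\mu(1)\in(0,1)$ with $\mu(0)+\mu(1)=1$, and a symmetric $2\times2$ matrix $(q(a,b))$ with $q(0,1)=q(1,0)$ and $0<q(a,b)<1$. On a probability space, $\{A,A_\ell(u):\ell,u\ge1\}$ are i.i.d. $\{0,1\}$-valued with $\mathbb{P}[A=1]=\mu(1)$, independent of i.i.d. uniform$(0,1)$ variables $\{U(u,v):1\le u<v\}$, $U(v,u)=U(u,v)$. With $\mathbf A_L(u)=(A_1(u),\dots,A_L(u))$ and $Q_L(\mathbf a,\mathbf b)=\prod_{\ell=1}^Lq(a_\ell,b_\ell)$, the graph $\mathbb{M}(n;L)$ on $\{1,\dots,n\}$ has an edge between distinct $u,v$ iff $U(u,v)\le Q_L(\mathbf A_L(u),\mathbf A_L(v))$. $I_n(L)$ denotes the number of isolated nodes (nodes with no neighbor) in $\mathbb{M}(n;L)$. $\Gamma(a)=\mathbb{E}[q(a,A)]$. A scaling $n\mapsto L_n$ of positive integers is $\rho$-admissible if $L_n\sim\rho\ln n$. *)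

(* Defs.v *)
From HB Require Import structures.
From mathcomp Require Import all_boot all_order all_algebra.
From mathcomp Require Import all_classical all_reals.
From mathcomp Require Import topology normedtype sequences exp.
Set Implicit Arguments. Unset Strict Implicit. Unset Printing Implicit Defensive.
Import Order.TTheory GRing.Theory Num.Theory.
Import numFieldNormedType.Exports.
Local Open Scope classical_set_scope.
Local Open Scope ring_scope.

Section MAG.
Variable R : realType.

(* mu b = P[A = b]; parametrized by p1 = mu(1), so mu(0) + mu(1) = 1. *)
Definition mu (p1 : R) (b : bool) : R := if b then p1 else 1 - p1.

Definition Gamma (p1 : R) (q : bool -> bool -> R) (a : bool) : R :=
  mu p1 false * q a false + mu p1 true * q a true.

Definition QL (q : bool -> bool -> R) (L : nat) (x y : {ffun 'I_L -> bool}) : R :=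
  \prod_(l < L) q (x l) (y l).

Definition attr_conf (n L : nat) := {ffun 'I_n -> {ffun 'I_L -> bool}}.
(* A graph on 'I_n: g (u, v) for u < v says whether {u, v} is an edge
   (entries with ~~ (u < v) carry zero probability unless false). *)
Definition graph_conf (n : nat) := {ffun 'I_n * 'I_n -> bool}.

Definition w_attr (p1 : R) (n L : nat) (a : attr_conf n L) : R :=
  \prod_(u < n) \prod_(l < L) mu p1 (a u l).

(* conditional probability of the graph given the attributes:
   edges {u,v} are independent, present with probability Q_L(A(u),A(v))
   (= P[U(u,v) <= Q_L(A(u),A(v))] for U(u,v) uniform on (0,1)). *)
Definition w_graph (q : bool -> bool -> R) (n L : nat) (a : attr_conf n L)
    (g : graph_conf n) : R :=
  \prod_(uv : 'I_n * 'I_n)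
    if (uv.1 < uv.2)%N then
      (if g uv then QL q (a uv.1) (a uv.2) else 1 - QL q (a uv.1) (a uv.2))
    else (if g uv then 0 else 1).

Definition adj (n : nat) (g : graph_conf n) (u v : 'I_n) : bool :=
  if (u < v)%N then g (u, v) else if (v < u)%N then g (v, u) else false.

Definition isolated_count (n : nat) (g : graph_conf n) : nat :=
  #|[set u : 'I_n | [forall v : 'I_n, ~~ adj g u v]]|.

Definition expected_isolated (p1 : R) (q : bool -> bool -> R) (n L : nat) : R :=
  \sum_(a : attr_conf n L) \sum_(g : graph_conf n)
     w_attr p1 a * w_graph q a g * (isolated_count g)%:R.

Definition admissible (rho : R) (Ln : nat -> nat) : Prop :=
  (forall n, (0 < Ln n)%N) /\
  ((fun n => (Ln n)%:R / (rho * ln (n%:R : R))) @ \oo --> (1 : R)).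

End MAG.

(* Main.v *)
Require Import Defs.
From HB Require Import structures.
From mathcomp Require Import all_boot all_order all_algebra.
From mathcomp Require Import all_classical all_reals.
From mathcomp Require Import topology normedtype sequences exp.
From mathcomp Require Import ring lra zify.
Import Order.TTheory GRing.Theory Num.Theory.
Import numFieldNormedType.Exports.
Local Open Scope classical_set_scope.
Local Open Scope ring_scope.
Set Implicit Arguments. Unset Strict Implicit. Unset Printing Implicit Defensive.

Section Comb.
Variable R : realType.
Variables (p1 : R) (q : bool -> bool -> R).

Definition wt L (x : {ffun 'I_L -> bool}) : R := \prod_(l < L) mu p1 (x l).
Definition PG L (x : {ffun 'I_L -> bool}) : R := \prod_(l < L) Gamma p1 q (x l).

Lemma sum_wt L : \sum_(y : {ffun 'I_L -> bool}) wt y = 1.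
Proof.
rewrite /wt -(bigA_distr_bigA (fun (l : 'I_L) (b : bool) => mu p1 b)).
by rewrite big1 // => l _; rewrite big_bool /mu /=; lra.
Qed.

Lemma sum_wtQ L (x : {ffun 'I_L -> bool}) : \sum_y wt y * QL q x y = PG x.
Proof.
transitivity (\sum_(y : {ffun 'I_L -> bool}) \prod_(l < L) (mu p1 (y l) * q (x l) (y l))).
  by apply: eq_bigr => y _; rewrite /wt /QL big_split.
rewrite -(bigA_distr_bigA (fun (l : 'I_L) (b : bool) => mu p1 b * q (x l) b)).
by apply: eq_bigr => l _; rewrite big_bool /Gamma addrC.
Qed.

Lemma prod_neq_const n (u : 'I_n) (c : R) : \prod_(v | v != u) c = c ^+ n.-1.
Proof. by rewrite prodr_const cardC1 card_ord. Qed.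

Lemma iso_count n (g : graph_conf n) :
  (isolated_count g)%:R = \sum_u ([forall v, ~~ adj g u v])%:R :> R.
Proof.
rewrite /isolated_count -sum1_card natr_sum big_mkcond /=.
apply: eq_bigr => u _; case: (boolP [forall _, _]) => hb.
  by rewrite mem_set.
by rewrite memNset //= => hb'; move: hb; rewrite hb'.
Qed.

Lemma iso_prod n (g : graph_conf n) (u : 'I_n) :
  ([forall v, ~~ adj g u v])%:R = \prod_(uv : 'I_n * 'I_n)
     (if (uv.1 < uv.2)%N && ((uv.1 == u) || (uv.2 == u)) then (~~ g uv)%:R else 1) :> R.
Proof.
case: (boolP [forall v, ~~ adj g u v]) => [/forallP H | /forallPn [v]].
  rewrite big1 // => [[i j]] _ /=; case: ifP => //= /andP [ij /orP [/eqP ei|/eqP ej]].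
    by subst i; have := H j; rewrite /adj ij; case: (g (u, j)).
  subst j; have := H i; rewrite /adj.
  have -> : (u < i)%N = false by apply/negP => h; move: (ltn_trans h ij); rewrite ltnn.
  by rewrite ij; case: (g (i, u)).
rewrite negbK /adj; case: (ltngtP u v) => // h guv.
  by rewrite (bigD1 (u, v)) //= h eqxx guv /= mul0r.
by rewrite (bigD1 (v, u)) //= h eqxx orbT guv /= mul0r.
Qed.

Lemma reindex n (F : 'I_n -> 'I_n -> R) (u : 'I_n) (Fs : forall i j, F i j = F j i) :
  \prod_(uv : 'I_n * 'I_n)
     (if (uv.1 < uv.2)%N && ((uv.1 == u) || (uv.2 == u)) then F uv.1 uv.2 else 1)
  = \prod_(v | v != u) F u v.
Proof.
transitivity (\prod_(i : 'I_n) \prod_(j : 'I_n) (if (i < j)%N && ((i == u) || (j == u)) then F i j else 1)).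
  by rewrite pair_bigA.
transitivity (\prod_(i : 'I_n) \prod_(j : 'I_n) ((if (i == u) && (i < j)%N then F u j else 1) *
                               (if (j == u) && (i < j)%N then F i u else 1))).
  apply: eq_bigr => i _; apply: eq_bigr => j _.
  have [->|iu] := eqVneq i u; have [->|ju] := eqVneq j u;
  by rewrite ?eqxx ?(negbTE iu) ?(negbTE ju) /= ?ltnn ?andbT ?andbF ?mulr1 ?mul1r.
rewrite (eq_bigr _ (fun i _ => big_split _ _ _ _ _)) big_split /=.
have E1 : \prod_(i : 'I_n) \prod_(j : 'I_n) (if (i == u) && (i < j)%N then F u j else 1)
          = \prod_(j : 'I_n) (if (u < j)%N then F u j else 1).
  rewrite (bigD1 u) //= [X in _ * X = _]big1 => [|i /negbTE iu]; last first.
    by apply: big1 => j _; rewrite iu.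
  by rewrite mulr1; apply: eq_bigr => j _; rewrite eqxx.
have E2 : \prod_(i : 'I_n) \prod_(j : 'I_n) (if (j == u) && (i < j)%N then F i u else 1)
          = \prod_(i : 'I_n) (if (i < u)%N then F u i else 1).
  apply: eq_bigr => i _; rewrite (bigD1 u) //= eqxx big1 => [|j /negbTE -> //].
  by rewrite mulr1 Fs.
rewrite E1 E2 -big_split /= [RHS]big_mkcond /=; apply: eq_bigr => v _.
have [->|vu] := eqVneq v u; first by rewrite ltnn mulr1.
rewrite /=; case: (ssrnat.ltngtP v u) => h; rewrite ?mulr1 ?mul1r //.
by move: vu; rewrite (val_inj h) eqxx.
Qed.

Lemma graph_sum n L (a : attr_conf n L) (u : 'I_n) :
  (forall b c, q b c = q c b) ->
  \sum_(g : graph_conf n) w_graph q a g * ([forall v, ~~ adj g u v])%:R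
  = \prod_(v | v != u) (1 - QL q (a u) (a v)).
Proof.
move=> qs.
pose h (uv : 'I_n * 'I_n) (b : bool) : R :=
  (if (uv.1 < uv.2)%N then (if b then QL q (a uv.1) (a uv.2) else 1 - QL q (a uv.1) (a uv.2))
   else (if b then 0 else 1)) *
  (if (uv.1 < uv.2)%N && ((uv.1 == u) || (uv.2 == u)) then (~~ b)%:R else 1).
transitivity (\sum_(g : graph_conf n) \prod_uv h uv (g uv)).
  by apply: eq_bigr => g _; rewrite iso_prod /w_graph -big_split.
rewrite -(bigA_distr_bigA h).
rewrite -(@reindex n (fun i j => 1 - QL q (a i) (a j)) u); last first.
  by move=> i j; congr (1 - _); apply: eq_bigr => l _; rewrite qs.
apply: eq_bigr => uv _; rewrite big_bool /h /=.
case: (uv.1 < uv.2)%N; case: (_ || _); rewrite /= ?(mulr1, mulr0, add0r, addr0, mul1r, mul0r) //; lra.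
Qed.

Lemma attr_sum n L (u : 'I_n) :
  \sum_(a : attr_conf n L) w_attr p1 a * \prod_(v | v != u) (1 - QL q (a u) (a v))
  = \sum_(x : {ffun 'I_L -> bool}) wt x * (1 - PG x) ^+ n.-1.
Proof.
pose H (x : {ffun 'I_L -> bool}) (v : 'I_n) (y : {ffun 'I_L -> bool}) : R :=
  if v == u then (if y == x then wt y else 0) else wt y * (1 - QL q x y).
transitivity (\sum_(a : attr_conf n L) \sum_(x : {ffun 'I_L -> bool}) \prod_(v : 'I_n) H x v (a v)).
  apply: eq_bigr => a _.
  rewrite (bigD1 (a u)) //= [X in _ = _ + X]big1 ?addr0; last first.
    move=> x xa; rewrite (bigD1 u) //= /H eqxx.
    have -> : (a u == x) = false by rewrite eq_sym; exact: negbTE.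
    by rewrite mul0r.
  rewrite [RHS](bigD1 u) //= /H !eqxx.
  have -> : w_attr p1 a = \prod_(v : 'I_n) wt (a v) by [].
  rewrite (bigD1 u) //= -mulrA -big_split /=; congr (_ * _).
  by apply: eq_bigr => v vu; rewrite (negbTE vu).
rewrite exchange_big /=; apply: eq_bigr => x _.
rewrite -(bigA_distr_bigA (H x)) (bigD1 u) //= /H eqxx.
have -> : \sum_(y : {ffun 'I_L -> bool}) (if y == x then wt y else 0) = wt x.
  by rewrite -big_mkcond big_pred1_eq.
congr (_ * _).
rewrite -(prod_neq_const u); apply: eq_bigr => v vu; rewrite (negbTE vu).
under eq_bigr do rewrite mulrBr mulr1.
by rewrite sumrB sum_wt sum_wtQ.
Qed.

Lemma EI n L (qs : forall b c, q b c = q c b) :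
  expected_isolated p1 q n L = n%:R * \sum_(x : {ffun 'I_L -> bool}) wt x * (1 - PG x) ^+ n.-1.
Proof.
rewrite /expected_isolated.
transitivity (\sum_(a : attr_conf n L) \sum_(u : 'I_n) w_attr p1 a *
   \sum_(g : graph_conf n) w_graph q a g * ([forall v, ~~ adj g u v])%:R).
  apply: eq_bigr => a _.
  transitivity (\sum_(g : graph_conf n) \sum_(u : 'I_n)
     w_attr p1 a * w_graph q a g * ([forall v, ~~ adj g u v])%:R).
    by apply: eq_bigr => g _; rewrite iso_count mulr_sumr.
  rewrite exchange_big /=; apply: eq_bigr => u _; rewrite mulr_sumr.
  by apply: eq_bigr => g _; rewrite mulrA.
rewrite exchange_big /=.
rewrite (eq_bigr (fun _ => \sum_(x : {ffun 'I_L -> bool}) wt x * (1 - PG x) ^+ n.-1)) => [|u _].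
  by rewrite sumr_const card_ord mulr_natl.
rewrite -(@attr_sum n L u); apply: eq_bigr => a _; by rewrite graph_sum.
Qed.
End Comb.

Section Bounds.
Variable R : realType.
Variables (p1 : R) (q : bool -> bool -> R).
Hypothesis hp : 0 < p1 < 1.
Hypothesis hq : forall a b, 0 < q a b < 1.
Hypothesis hG : Gamma p1 q false < Gamma p1 q true.

Lemma Gam_bounds b : 0 < Gamma p1 q b < 1.
Proof.
rewrite /Gamma /mu /=; case/andP: hp => h1 h2.
case/andP: (hq b false) => h3 h4; case/andP: (hq b true) => h5 h6.
apply/andP; split; nra.
Qed.

Lemma wt_ge0 L (x : {ffun 'I_L -> bool}) : 0 <= wt p1 x.
Proof.
apply: prodr_ge0 => l _; rewrite /mu; case/andP: hp => h1 h2.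
by case: (x l); lra.
Qed.

Lemma PG_bounds L (x : {ffun 'I_L -> bool}) :
  Gamma p1 q false ^+ L <= PG p1 q x <= 1.
Proof.
apply/andP; split.
  have -> : Gamma p1 q false ^+ L = \prod_(l < L) Gamma p1 q false by rewrite prodr_const card_ord.
  apply: ler_prod => l _.
  case/andP: (Gam_bounds false) => h1 h2; rewrite (ltW h1) /=.
  by case: (x l) => //; apply: ltW.
apply: prodr_ile1 => l _; case/andP: (Gam_bounds (x l)) => h1 h2.
by rewrite (ltW h1) (ltW h2).
Qed.

Lemma S_upper L k :
  \sum_(x : {ffun 'I_L -> bool}) wt p1 x * (1 - PG p1 q x) ^+ k
  <= (1 - Gamma p1 q false ^+ L) ^+ k.
Proof.
apply: (@le_trans _ _ (\sum_(x : {ffun 'I_L -> bool}) wt p1 x * (1 - Gamma p1 q false ^+ L) ^+ k)).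
  apply: ler_sum => x _; apply: ler_wpM2l; first exact: wt_ge0.
  case/andP: (PG_bounds x) => h1 h2.
  apply: lerXn2r; rewrite ?nnegrE; lra.
by rewrite -mulr_suml sum_wt mul1r.
Qed.

Lemma S_lower L k :
  mu p1 false ^+ L * (1 - Gamma p1 q false ^+ L) ^+ k <=
  \sum_(x : {ffun 'I_L -> bool}) wt p1 x * (1 - PG p1 q x) ^+ k.
Proof.
rewrite (bigD1 [ffun => false]) //= -[X in X <= _]addr0 lerD //; last first.
  apply: sumr_ge0 => x _; apply: mulr_ge0; first exact: wt_ge0.
  case/andP: (PG_bounds x) => h1 h2; apply: exprn_ge0; lra.
rewrite /wt /PG.
under eq_bigr do rewrite ffunE.
under [X in _ <= _ * (1 - X) ^+ _]eq_bigr do rewrite ffunE.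
by rewrite !prodr_const card_ord.
Qed.

Lemma S_ge0 L k : 0 <= \sum_(x : {ffun 'I_L -> bool}) wt p1 x * (1 - PG p1 q x) ^+ k.
Proof.
apply: sumr_ge0 => x _; apply: mulr_ge0; first exact: wt_ge0.
case/andP: (PG_bounds x) => h1 h2; apply: exprn_ge0; lra.
Qed.
End Bounds.

Section Analytic.
Variable R : realType.

Lemma bern (t : R) k : 0 <= t <= 1 -> 1 - k%:R * t <= (1 - t) ^+ k.
Proof.
case/andP => h1 h2; elim: k => [|k IH]; first by rewrite mul0r subr0 expr0.
rewrite exprS -addn1 natrD.
have hk : 0 <= k%:R :> R by apply: ler0n.
have hp : 0 <= (1 - t) ^+ k by apply: exprn_ge0; lra.
nra.
Qed.

Lemma pow_le_exp (t : R) k : 0 <= t <= 1 -> (1 - t) ^+ k <= expR (- (k%:R * t)).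
Proof.
case/andP => h1 h2.
rewrite -mulrN expRM_natl; apply: lerXn2r; rewrite ?nnegrE ?(ltW (expR_gt0 _)) //; first lra.
by have := expR_ge1Dx (- t); rewrite -[1 - t]/(1 + - t).
Qed.

Lemma exp_neg_le (x : R) : 0 <= x -> expR (- x) <= (1 + x)^-1.
Proof.
move=> hx; rewrite expRN lef_pV2 ?posrE ?expR_gt0 ?expR_ge1Dx //; lra.
Qed.

Lemma powE (y : R) L : 0 < y -> y ^+ L = expR (L%:R * ln y).
Proof. by move=> hy; rewrite expRM_natl lnK. Qed.

Lemma ln_large (B : R) : \forall n \near \oo, B <= ln (n%:R : R).
Proof.
near=> n.
have h : expR B <= n%:R by near: n; exact: nbhs_infty_ger.
rewrite -[X in X <= _]expRK ler_ln ?posrE ?expR_gt0 //.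
exact: lt_le_trans (expR_gt0 B) h.
Unshelve. all: by end_near.
Qed.

Lemma adm_bounds (rho : R) Ln e : 0 < rho -> 0 < e -> admissible rho Ln ->
  \forall n \near \oo, (1 - e) * (rho * ln (n%:R : R)) <= (Ln n)%:R <= (1 + e) * (rho * ln (n%:R : R)).
Proof.
move=> hr he [_ /cvgrPdist_le H].
near=> n.
have hl : 1 <= ln (n%:R : R) by near: n; exact: ln_large.
have h : `|1 - (Ln n)%:R / (rho * ln (n%:R : R))| <= e by near: n; exact: H.
move: h; set t := _ / _ => h.
have hP : 0 < rho * ln (n%:R : R) by apply: mulr_gt0 => //; lra.
have -> : (Ln n)%:R = t * (rho * ln (n%:R : R)) by rewrite /t divfK // gt_eqF.
move: h; rewrite ler_norml => /andP [h1 h2].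
apply/andP; split; nra.
Unshelve. all: by end_near.
Qed.
End Analytic.

Unset Implicit Arguments.
Lemma case1_core (R : realType) (rho l L G M e1 e2 k A : R) (n : nat) :
  0 < rho -> 0 <= L -> k <= expR l -> 0 <= k -> 1 <= l ->
  2 <= l * - (1 + rho * G) -> 4 * `|A| <= l * (1 + rho * M) ->
  (1 - e1) * (rho * l) <= L -> L <= (1 + e2) * (rho * l) ->
  e1 * (rho * G) = (1 + rho * G) / 2 -> e2 * (rho * M) = - (1 + rho * M) / 2 ->
  G < 0 -> M < 0 -> 1 + rho * G < 0 -> 0 < 1 + rho * M ->
  (forall t, 0 <= t <= 1 -> 1 - k * t <= (1 - t) ^+ n) ->
  A <= expR l * (expR (L * M) * (1 - expR (L * G)) ^+ n).
Proof.
move=> hr L0 hk k0 hl1 hl2 hl3 hL1 hL2 he1G he2M lng lnm hc hd hb.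
  have X1 : L * G <= (1 - e1) * (rho * l) * G := ler_wnM2r (ltW lng) hL1.
  have I1 : (1 - e1) * (rho * l) * G = rho * l * G - (1 + rho * G) / 2 * l.
    have -> : (1 - e1) * (rho * l) * G = rho * l * G - e1 * (rho * G) * l by ring.
    by rewrite he1G.
  have X2 : (1 + e2) * (rho * l) * M <= L * M := ler_wnM2r (ltW lnm) hL2.
  have I2 : (1 + e2) * (rho * l) * M = rho * l * M - (1 + rho * M) / 2 * l.
    have -> : (1 + e2) * (rho * l) * M = rho * l * M + e2 * (rho * M) * l by ring.
    rewrite he2M; ring.
  have K1 : l + L * G <= (1 + rho * G) / 2 * l by lra.
  have K2 : (1 + rho * M) / 2 * l <= l + L * M by lra.
  have T1 : k * expR (L * G) <= 2^-1.
    apply: le_trans (ler_wpM2r (ltW (expR_gt0 _)) hk) _.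
    rewrite -expRD.
    apply: (@le_trans _ _ (expR (- (- (1 + rho * G) / 2 * l)))).
      by rewrite ler_expR; lra.
    apply: le_trans (exp_neg_le _) _; first nra.
    rewrite lef_pV2 ?posrE; nra.
  have T2 : 2^-1 <= (1 - expR (L * G)) ^+ n.
    have h01 : 0 <= expR (L * G) <= 1.
      rewrite (ltW (expR_gt0 _)) /= -expR0 ler_expR; nra.
    apply: le_trans (hb _ h01); lra.
  have T3 : 1 + (1 + rho * M) / 2 * l <= expR l * expR (L * M).
    by rewrite -expRD; apply: le_trans (expR_ge1Dx _); lra.
  rewrite mulrA.
  apply: (@le_trans _ _ ((1 + (1 + rho * M) / 2 * l) * 2^-1)).
    have := ler_norm A; lra.
  have hA := normr_ge0 A.
  apply: ler_pM => //; lra.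
Qed.
Arguments case1_core {R rho l L G M e1 e2 k A n}.

Lemma case2_core (R : realType) (rho l L G c e1 k eps : R) (n : nat) :
  0 < rho -> 0 < eps -> 0 <= L -> expR l / 2 <= k -> 1 <= l ->
  32 <= l * c ^+ 2 -> eps^-1 <= l ->
  L <= (1 + e1) * (rho * l) -> c = 1 + rho * G -> e1 * (rho * G) = - c / 2 ->
  G < 0 -> 0 < c ->
  (forall t, 0 <= t <= 1 -> (1 - t) ^+ n <= expR (- (k * t))) ->
  expR l * (1 - expR (L * G)) ^+ n <= eps.
Proof.
move=> hr heps L0 hk hl1 hl2 hl3 hL hcd he1G lng hc hb.
have X : (1 + e1) * (rho * l) * G <= L * G := ler_wnM2r (ltW lng) hL.
have I : (1 + e1) * (rho * l) * G = rho * l * G - c / 2 * l.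
  have -> : (1 + e1) * (rho * l) * G = rho * l * G + e1 * (rho * G) * l by ring.
  rewrite he1G; ring.
have K : c / 2 * l - l <= L * G by rewrite hcd in I *; lra.
have hs : 0 <= c / 2 * l by apply: mulr_ge0; lra.
have h01 : 0 <= expR (L * G) <= 1.
  rewrite (ltW (expR_gt0 _)) /= -expR0 ler_expR; nra.
have hZ1 : expR (c / 2 * l - l) <= expR (L * G) by rewrite ler_expR.
have hk0 : 0 <= expR l / 2 by have := expR_gt0 l; lra.
have hZ2 : expR l / 2 * expR (c / 2 * l - l) <= k * expR (L * G).
  by apply: ler_pM => //; apply: ltW; apply: expR_gt0.
have hZ3 : expR l * expR (c / 2 * l - l) = expR (c / 2 * l).
  by rewrite -expRD; congr expR; ring.
have hZ4 : 1 + (c / 2 * l) ^+ 2 / 2 <= expR (c / 2 * l).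
  by have := expR_ge1Dxn 1 hs.
have hZ : (c / 2 * l) ^+ 2 / 4 <= k * expR (L * G).
  apply: le_trans hZ2; lra.
have hW : eps^-1 <= k * expR (L * G) - l.
  have : 32 * l <= l * (l * c ^+ 2) by nra.
  have e : (c / 2 * l) ^+ 2 / 4 = l * (l * c ^+ 2) / 16 by field.
  rewrite e in hZ.
  lra.
apply: le_trans (ler_wpM2l (ltW (expR_gt0 _)) (hb _ h01)) _.
rewrite -expRD.
have -> : l + - (k * expR (L * G)) = - (k * expR (L * G) - l) by ring.
have hei : 0 < eps^-1 by rewrite invr_gt0.
apply: le_trans (exp_neg_le _) _; first lra.
rewrite invf_ple ?posrE //; lra.
Qed.
Arguments case2_core {R rho l L G c e1 k eps n}.

Theorem proposition1 (R : realType) (p1 : R) (q : bool -> bool -> R) (rho : R)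
  (Ln : nat -> nat) :
  0 < p1 < 1 ->
  q false true = q true false ->
  (forall a b, 0 < q a b < 1) ->
  0 < rho ->
  Gamma p1 q false < Gamma p1 q true ->
  0 < 1 + rho * ln (mu p1 false) ->
  admissible rho Ln ->
  (1 + rho * ln (Gamma p1 q false) < 0 ->
     (fun n => expected_isolated p1 q n (Ln n)) @ \oo --> +oo) /\
  (0 < 1 + rho * ln (Gamma p1 q false) ->
     (fun n => expected_isolated p1 q n (Ln n)) @ \oo --> (0 : R)).
Proof.
move=> hp qs hq hr hG hd hadm.
have qsym : forall b c, q b c = q c b by case; case.
have hg := Gam_bounds hp hq false.
have hm : 0 < mu p1 false < 1 by rewrite /mu; case/andP: hp => ? ?; apply/andP; split; lra.
have lng := ln_lt0 hg.
have lnm := ln_lt0 hm.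
have bnd : forall n, n%:R * (mu p1 false ^+ Ln n * (1 - Gamma p1 q false ^+ Ln n) ^+ n.-1)
   <= expected_isolated p1 q n (Ln n) <= n%:R * (1 - Gamma p1 q false ^+ Ln n) ^+ n.-1.
  move=> n; rewrite (@EI R p1 q n (Ln n) qsym); apply/andP; split; apply: ler_wpM2l => //.
    exact: S_lower.
  exact: S_upper.
have E0 : forall n, 0 <= expected_isolated p1 q n (Ln n).
  by move=> n; rewrite (@EI R p1 q n (Ln n) qsym); apply: mulr_ge0 => //; exact: S_ge0.
have gL : forall n, Gamma p1 q false ^+ Ln n = expR ((Ln n)%:R * ln (Gamma p1 q false)).
  by move=> n; apply: powE; case/andP: hg.
have mL : forall n, mu p1 false ^+ Ln n = expR ((Ln n)%:R * ln (mu p1 false)).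
  by move=> n; apply: powE; case/andP: hm.
have nE : forall n, (0 < n)%N -> (n%:R : R) = expR (ln n%:R).
  by move=> n hn; rewrite lnK // posrE ltr0n.
split.
- move=> hc; apply/cvgryPge => A.
  pose e1 : R := (- (1 + rho * ln (Gamma p1 q false))) / (2 * (rho * - ln (Gamma p1 q false))).
  pose e2 : R := (1 + rho * ln (mu p1 false)) / (2 * (rho * - ln (mu p1 false))).
  have he1 : 0 < e1 by apply: divr_gt0; [lra | apply: mulr_gt0 => //; nra].
  have he2 : 0 < e2 by apply: divr_gt0; [lra | apply: mulr_gt0 => //; nra].
  have he1G : e1 * (rho * ln (Gamma p1 q false)) = (1 + rho * ln (Gamma p1 q false)) / 2.
    by rewrite /e1; field; rewrite (ltr0_neq0 lng) (gt_eqF hr).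
  have he2M : e2 * (rho * ln (mu p1 false)) = - (1 + rho * ln (mu p1 false)) / 2.
    by rewrite /e2; field; rewrite (ltr0_neq0 lnm) (gt_eqF hr).
  near=> n.
  have hn : (2 <= n)%N by near: n; exact: nbhs_infty_ge.
  have hl1 : 1 <= ln (n%:R : R) by near: n; exact: ln_large.
  have hl2 : 2 <= ln (n%:R : R) * - (1 + rho * ln (Gamma p1 q false)).
    rewrite -ler_pdivrMr; last lra.
    by near: n; exact: ln_large.
  have hl3 : 4 * `|A| <= ln (n%:R : R) * (1 + rho * ln (mu p1 false)).
    rewrite -ler_pdivrMr; last lra.
    by near: n; exact: ln_large.
  have /andP [hL1 _] : (1 - e1) * (rho * ln (n%:R : R)) <= (Ln n)%:R <= (1 + e1) * (rho * ln (n%:R : R)).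
    by near: n; exact: adm_bounds.
  have /andP [_ hL2] : (1 - e2) * (rho * ln (n%:R : R)) <= (Ln n)%:R <= (1 + e2) * (rho * ln (n%:R : R)).
    by near: n; exact: adm_bounds.
  have /andP [hb _] := bnd n.
  apply: le_trans hb.
  have h0 : (0 < n)%N := leq_trans (isT : (1 <= 2)%N) hn.
  have hk : (n.-1)%:R <= expR (ln (n%:R : R)).
    by rewrite -(nE n h0) ler_nat leq_pred.
  rewrite (gL n) (mL n) (nE n h0).
  apply: (case1_core hr (ler0n R (Ln n)) hk (ler0n R n.-1) hl1 hl2 hl3 hL1 hL2 he1G he2M lng lnm hc hd).
  by move=> t ht; exact: (@bern R t n.-1 ht).
- move=> hc; apply/cvgrPdist_le => eps heps.
  pose e1 : R := (1 + rho * ln (Gamma p1 q false)) / (2 * (rho * - ln (Gamma p1 q false))).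
  have he1G : e1 * (rho * ln (Gamma p1 q false)) = - (1 + rho * ln (Gamma p1 q false)) / 2.
    by rewrite /e1; field; rewrite (ltr0_neq0 lng) (gt_eqF hr).
  have he1 : 0 < e1 by apply: divr_gt0; [lra | apply: mulr_gt0 => //; nra].
  have hc2 : 0 < (1 + rho * ln (Gamma p1 q false)) ^+ 2 by apply: exprn_gt0.
  near=> n.
  have hn : (2 <= n)%N by near: n; exact: nbhs_infty_ge.
  have h0 : (0 < n)%N := leq_trans (isT : (1 <= 2)%N) hn.
  have hl1 : 1 <= ln (n%:R : R) by near: n; exact: ln_large.
  have hl2 : 32 <= ln (n%:R : R) * (1 + rho * ln (Gamma p1 q false)) ^+ 2.
    rewrite -ler_pdivrMr //.
    by near: n; exact: ln_large.
  have hl3 : eps^-1 <= ln (n%:R : R) by near: n; exact: ln_large.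
  have /andP [_ hL] : (1 - e1) * (rho * ln (n%:R : R)) <= (Ln n)%:R <= (1 + e1) * (rho * ln (n%:R : R)).
    by near: n; exact: adm_bounds.
  rewrite sub0r normrN ger0_norm ?E0 //.
  have /andP [_ hb] := bnd n.
  apply: le_trans hb _.
  have h1 : (1 <= n.-1)%N by rewrite -(leq_add2r 1) !addn1 prednK.
  have hk : expR (ln (n%:R : R)) / 2 <= (n.-1)%:R.
    rewrite -(nE n h0).
    have -> : (n%:R : R) = (n.-1)%:R + 1 by rewrite natr1 prednK.
    have : (1 : R) <= (n.-1)%:R by rewrite ler1n.
    lra.
  rewrite (gL n) (nE n h0).
  apply: (case2_core hr heps (ler0n R (Ln n)) hk hl1 hl2 hl3 hL erefl he1G lng hc).
  by move=> t ht; exact: (@pow_le_exp R t n.-1 ht).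
  Unshelve. all: by end_near.
Qed.
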